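(* Let $G$ be a simple graph on vertex set $\{x_1,\dots,x_n\}$ and let $e=x_ix_j$ be an edge of $G$. Then $$\big(I(G)^{(2)}:e\big)=I(G)+\big(x_px_q: x_p\in N_G(x_i),\ x_q\in N_G(x_j),\ x_p\neq x_q\big)+\big(x_t: x_t\in N_G(x_i)\cap N_G(x_j)\big).$$
   Context: $S=\mathbb{K}[x_1,\dots,x_n]$ over a field $\mathbb{K}$; vertices of $G$ are identified with variables and edges with the corresponding quadratic monomials. $I(G)=(x_ix_j : x_ix_j\in E(G))$ is the edge ideal. $N_G(x_i)=\{x_j : x_ix_j\in E(G)\}$. With $\mathcal{C}(G)$ the set of minimal vertex covers of $G$ and $\mathfrak{p}_C$ the ideal generated by the variables in $C$, the symbolic power is $I(G)^{(s)}=\bigcap_{C\in\mathcal{C}(G)}\mathfrak{p}_C^s$. *)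

(* Defs.v *)
From HB Require Import structures.
From mathcomp Require Import all_boot all_order all_algebra.
Unset Printing Implicit Defensive.
Import GRing.Theory.
Local Open Scope ring_scope.

(* The polynomial ring K[x_0,...,x_{n-1}], built as iterated univariate
   polynomial rings: mpoly K 0 = K, mpoly K (n+1) = (mpoly K n)[x_n]. *)
Fixpoint mpoly (K : comNzRingType) (n : nat) : comNzRingType :=
  match n with
  | 0 => K
  | n'.+1 => ({poly mpoly K n'} : comNzRingType)
  end.

(* The variable x_i (for i < n) of mpoly K n; the value for i >= n is
   irrelevant (0). *)
Fixpoint mvar (K : comNzRingType) (n : nat) (i : nat) : mpoly K n :=
  match n return mpoly K n with
  | 0 => 0
  | n'.+1 => if i == n' then 'X else (mvar K n' i)%:P
  end.

Definition x (K : comNzRingType) {n : nat} (i : 'I_n) : mpoly K n := mvar K n i.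

(* Ideals are represented as predicates; the ideal generated by a
   (possibly infinite) set P of elements: finite R-linear combinations. *)
Definition ideal_gen {R : comNzRingType} (P : R -> Prop) : R -> Prop :=
  fun f => exists (k : nat) (a g : 'I_k -> R),
      (forall l, P (g l)) /\ f = \sum_(l < k) a l * g l.

Definition edge_ideal (K : comNzRingType) {n : nat} (E : rel 'I_n)
  : mpoly K n -> Prop :=
  ideal_gen (fun f => exists i j, E i j /\ f = x K i * x K j).

Definition vertex_cover {n : nat} (E : rel 'I_n) (C : {set 'I_n}) : Prop :=
  forall i j, E i j -> (i \in C) || (j \in C).

Definition minimal_vertex_cover {n : nat} (E : rel 'I_n) (C : {set 'I_n})
  : Prop :=
  vertex_cover E C /\ (forall D : {set 'I_n}, D \proper C -> ~ vertex_cover E D).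

(* p_C^s : the s-th power of the prime generated by the variables in C,
   generated by all products of s variables from C. *)
Definition prime_pow (K : comNzRingType) {n : nat} (C : {set 'I_n}) (s : nat)
  : mpoly K n -> Prop :=
  ideal_gen (fun f => exists t : s.-tuple 'I_n,
      (forall k, k \in t -> k \in C) /\ f = \prod_(k <- t) x K k).

(* Symbolic power I(G)^(s) = intersection over minimal vertex covers. *)
Definition symb_pow (K : comNzRingType) {n : nat} (E : rel 'I_n) (s : nat)
  : mpoly K n -> Prop :=
  fun f => forall C : {set 'I_n}, minimal_vertex_cover E C -> prime_pow K C s f.

Definition colon {R : comNzRingType} (I : R -> Prop) (g : R) : R -> Prop :=
  fun f => I (f * g).

(* Main.v *)
Require Import Defs.
From HB Require Import structures.
From mathcomp Require Import all_boot all_order all_algebra.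
Set Implicit Arguments. Unset Strict Implicit. Unset Printing Implicit Defensive.
Import GRing.Theory.
Local Open Scope ring_scope.

Section Alg.
Variable K : fieldType.

Fixpoint mono (n : nat) (e : nat -> nat) : mpoly K n :=
  match n return mpoly K n with
  | 0 => 1
  | n'.+1 => (@mono n' e)%:P * 'X^(e n')
  end.

Fixpoint coef (n : nat) (e : nat -> nat) : mpoly K n -> K :=
  match n return mpoly K n -> K with
  | 0 => fun f => f
  | n'.+1 => fun f => @coef n' e ((f : {poly mpoly K n'})`_(e n'))
  end.

Fixpoint cst (n : nat) (c : K) : mpoly K n :=
  match n return mpoly K n with
  | 0 => c
  | n'.+1 => (@cst n' c)%:P
  end.

Fixpoint leexp (n : nat) (a b : nat -> nat) : bool :=
  match n with 0 => true | n'.+1 => (a n' <= b n')%N && leexp n' a b end.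
Fixpoint eqexp (n : nat) (a b : nat -> nat) : bool :=
  match n with 0 => true | n'.+1 => (a n' == b n') && eqexp n' a b end.

Lemma mcoefD n e (f g : mpoly K n) : coef e (f + g) = coef e f + coef e g.
Proof. elim: n e f g => [//|n IH] e f g /=. by rewrite coefD IH. Qed.

Lemma mcoef0 n e : coef e (0 : mpoly K n) = 0.
Proof. elim: n => [//|n IH] /=. by rewrite coef0 IH. Qed.

Lemma mcoefN n e (f : mpoly K n) : coef e (- f) = - coef e f.
Proof. elim: n e f => [//|n IH] e f /=. by rewrite coefN IH. Qed.

Lemma mcoefB n e (f g : mpoly K n) : coef e (f - g) = coef e f - coef e g.
Proof. by rewrite mcoefD mcoefN. Qed.

Lemma coef_sum n e I (s : seq I) (P : pred I) (F : I -> mpoly K n) :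
  coef e (\sum_(i <- s | P i) F i) = \sum_(i <- s | P i) coef e (F i).
Proof. by apply: (big_morph _ (mcoefD e) (mcoef0 n e)). Qed.

Lemma coef_cstM n e c (f : mpoly K n) : coef e (cst n c * f) = c * coef e f.
Proof. elim: n e f => [//|n IH] e f /=. by rewrite coefCM IH. Qed.

Lemma coef_mulmono n e e2 (a : mpoly K n) :
  coef e (a * mono n e2) = if leexp n e2 e then coef (fun l => (e l - e2 l)%N) a else 0.
Proof.
elim: n e e2 a => [|n IH] e e2 a /=; first by rewrite mulr1.
rewrite mulrA coefMXn.
case: (ltnP (e n) (e2 n)) => h.
  by rewrite /=; apply: mcoef0.
by rewrite /= coefMC IH.
Qed.




Lemma mono_ext n e e' : (forall l, (l < n)%N -> e l = e' l) -> mono n e = mono n e'.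
Proof.
elim: n => [//|n IH] H /=.
rewrite IH ?H // => l hl; apply: H; exact: ltnW.
Qed.

Lemma coef_ext n e e' (f : mpoly K n) :
  (forall l, (l < n)%N -> e l = e' l) -> coef e f = coef e' f.
Proof.
elim: n e e' f => [//|n IH] e e' f H /=.
rewrite H // (IH e e') // => l hl; apply: H; exact: ltnW.
Qed.

Lemma mono0 n : mono n (fun _ => 0%N) = 1.
Proof. elim: n => [//|n IH] /=. by rewrite IH expr0 mulr1. Qed.

Lemma mono_add n e1 e2 : mono n (fun l => e1 l + e2 l)%N = mono n e1 * mono n e2.
Proof.
elim: n => [//|n IH] /=; first by rewrite mulr1.
rewrite IH polyCM exprD.
rewrite -!mulrA; congr (_ * _).
by rewrite mulrC -!mulrA; congr (_ * _); rewrite mulrC.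
Qed.

Lemma mvar_mono n (i : nat) : (i < n)%N -> mvar K n i = mono n (fun l => nat_of_bool (l == i)).
Proof.
elim: n => [//|n IH] hi /=.
case: eqP => [->|ne].
  rewrite eqxx expr1 (mono_ext (e' := fun _ => 0%N)) ?mono0 ?mul1r //.
  by move=> l hl; rewrite (ltn_eqF hl).
rewrite IH; last by rewrite ltn_neqAle -ltnS hi andbT; apply/eqP.
have -> : (n == i) = false by apply/eqP => h; apply: ne.
by rewrite expr0 mulr1.
Qed.

Lemma coef_mono n e e' : coef e (mono n e') = if eqexp n e e' then 1 else 0.
Proof.
elim: n => [//|n IH] /=.
rewrite coefCM coefXn eq_sym.
case: eqP => _ /=; last by rewrite mulr0; apply: mcoef0.
by rewrite mulr1 IH.
Qed.

Lemma coef_zero n (f : mpoly K n) : (forall e, coef e f = 0) -> f = 0.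
Proof.
elim: n f => [|n IH] f H; first exact: (H (fun _ => 0%N)).
apply/polyP => k; rewrite coef0.
apply: IH => e.
have := H (fun l => if l == n then k else e l).
rewrite /= eqxx => <-.
apply: coef_ext => l hl; by rewrite (ltn_eqF hl).
Qed.

Lemma leexpP n a b : reflect (forall l, (l < n)%N -> (a l <= b l)%N) (leexp n a b).
Proof.
elim: n => [|n IH] /=; first by constructor.
apply: (iffP andP) => [[h1 /IH h2] l hl | H].
  rewrite ltnS leq_eqVlt in hl; case/orP: hl => [/eqP->//|]; exact: h2.
split; first exact: H.
apply/IH => l hl; apply: H; exact: ltnW.
Qed.

Lemma eqexpP n a b : reflect (forall l, (l < n)%N -> a l = b l) (eqexp n a b).
Proof.
elim: n => [|n IH] /=; first by constructor.
apply: (iffP andP) => [[/eqP h1 /IH h2] l hl | H].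
  rewrite ltnS leq_eqVlt in hl; case/orP: hl => [/eqP->//|]; exact: h2.
split; first by apply/eqP; exact: H.
apply/IH => l hl; apply: H; exact: ltnW.
Qed.

Definition islin n (f : mpoly K n) := exists s : seq ((nat -> nat) * K),
  f = \sum_(p <- s) cst n p.2 * mono n p.1.

Lemma islin_add n (f g : mpoly K n) : islin f -> islin g -> islin (f + g).
Proof. by move=> [s ->] [t ->]; exists (s ++ t); rewrite big_cat. Qed.

Lemma islin_all n (f : mpoly K n) : islin f.
Proof.
elim: n f => [|n IH] f.
  by exists [:: (fun _ => 0%N, f)]; rewrite big_seq1 /= mulr1.
rewrite -[f]coefK poly_def.
apply: (big_ind (@islin n.+1)).
- by exists [::]; rewrite big_nil.
- exact: islin_add.
move=> k _.
have [s ->] := IH (f`_k).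
exists [seq ((fun l => if l == n then val k else p.1 l), p.2) | p <- s].
rewrite big_map -mul_polyC rmorph_sum big_distrl /=.
apply: eq_bigr => p _.
rewrite eqxx (mono_ext (e' := p.1)); first by rewrite rmorphM mulrA.
by move=> l hl; rewrite (ltn_eqF hl).
Qed.

End Alg.
Section Graph.
Variables (n : nat) (E : rel 'I_n) (Esym : symmetric E) (Eirr : irreflexive E).

Definition indep (M : {set 'I_n}) : bool :=
  [forall a, forall b, ((a \in M) && (b \in M)) ==> ~~ E a b].

Lemma indepP (M : {set 'I_n}) : reflect (forall a b, a \in M -> b \in M -> ~~ E a b) (indep M).
Proof.
apply: (iffP forallP) => [H a b ha hb | H a].
  by have /forallP/(_ b) := H a; rewrite ha hb.
by apply/forallP => b; apply/implyP => /andP [ha hb]; apply: H.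
Qed.

Lemma max_indep (T : {set 'I_n}) : indep T ->
  exists M, [/\ indep M, T \subset M & forall c, c \notin M -> ~~ indep (c |: M)].
Proof.
move=> hT.
have PT : indep T && (T \subset T) by rewrite hT subxx.
case: (@arg_maxnP _ T (fun M => indep M && (T \subset M)) (fun M => #|M|) PT)
  => M /andP [iM sM] Hmax.
exists M; split => // c cM; apply/negP => ic.
have := Hmax (c |: M); rewrite ic (subset_trans sM (subsetUr _ _)) => /(_ isT).
by rewrite cardsU1 cM add1n /= ltnn.
Qed.

Lemma mvc_compl (M : {set 'I_n}) : indep M -> (forall c, c \notin M -> ~~ indep (c |: M)) ->
  minimal_vertex_cover E (~: M).
Proof.
move=> /indepP iM Hmax; split.
  move=> a b eab; rewrite !in_setC.
  case: (boolP (a \in M)) => ha //; case: (boolP (b \in M)) => hb //.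
  by have := iM a b ha hb; rewrite eab.
move=> D /properP [sD [c cC cD]] vD.
move: (cC); rewrite in_setC => cM.
move: (Hmax c cM); rewrite /indep => /forallPn [a /forallPn [b]].
rewrite negb_imply negbK => /andP [/andP [ha hb] eab].
have notD y : y \in M -> y \notin D.
  by move=> yM; apply/negP => /(subsetP sD); rewrite in_setC yM.
have vab := vD a b eab; move: vab eab.
move: ha hb; rewrite !in_setU1 => /orP [/eqP-> | aM] /orP [/eqP-> | bM].
- by rewrite Eirr.
- by rewrite (negbTE cD) (negbTE (notD _ bM)).
- by rewrite (negbTE cD) (negbTE (notD _ aM)).
- by move=> _ eab; have := iM a b aM bM; rewrite eab.
Qed.

Lemma cover_for (e : nat -> nat) (a b : 'I_n) (Eab : E a b)
  (Hind : forall p q : 'I_n, (0 < e p)%N -> (0 < e q)%N -> ~~ E p q)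
  (Ha : forall k : 'I_n, (0 < e k)%N -> ~~ E a k) :
  exists C, [/\ minimal_vertex_cover E C, (forall k, k \in C -> e k = 0%N),
     a \notin C & b \in C].
Proof.
pose T := a |: [set k : 'I_n | (0 < e k)%N].
have iT : indep T.
  apply/indepP => p q; rewrite !in_setU1 !inE.
  case/orP => [/eqP-> | hp]; case/orP => [/eqP-> | hq].
  - by rewrite Eirr.
  - exact: Ha.
  - by rewrite Esym; apply: Ha.
  - exact: Hind.
have [M [iM sM mM]] := max_indep iT.
have mvc := mvc_compl iM mM.
exists (~: M); split => //.
- move=> k; rewrite in_setC => kM.
  case: (posnP (e k)) => // hk.
  by move/negP: kM; case; apply: (subsetP sM); rewrite !inE hk orbT.
- by rewrite in_setC negbK; apply: (subsetP sM); rewrite !inE eqxx.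
- have := (proj1 mvc) a b Eab.
  by rewrite !in_setC (subsetP sM) //= !inE eqxx.
Qed.
End Graph.

Section Ideal.
Variable R : comNzRingType.
Variable P : R -> Prop.

Lemma ig0 : ideal_gen P 0.
Proof. by exists 0%N, (fun _ => 0), (fun _ => 0); split => [[]//|]; rewrite big_ord0. Qed.

Lemma igD f g : ideal_gen P f -> ideal_gen P g -> ideal_gen P (f + g).
Proof.
move=> [k1 [a1 [g1 [P1 ->]]]] [k2 [a2 [g2 [P2 ->]]]].
exists (k1 + k2)%N, (fun l => match split l with inl l1 => a1 l1 | inr l2 => a2 l2 end),
  (fun l => match split l with inl l1 => g1 l1 | inr l2 => g2 l2 end).
split.
  by move=> l; case: (split l).
rewrite big_split_ord /=; congr (_ + _); apply: eq_bigr => l _.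
  by rewrite (unsplitK (inl l)).
by rewrite (unsplitK (inr l)).
Qed.

Lemma igM c f : ideal_gen P f -> ideal_gen P (c * f).
Proof.
move=> [k [a [g [Pg ->]]]]; exists k, (fun l => c * a l), g; split => //.
by rewrite big_distrr /=; apply: eq_bigr => l _; rewrite mulrA.
Qed.

Lemma igG c g : P g -> ideal_gen P (c * g).
Proof.
move=> Pg; exists 1%N, (fun _ => c), (fun _ => g); split => //.
by rewrite big_ord1.
Qed.

Lemma ig_sum I (s : seq I) (Q : pred I) (F : I -> R) :
  (forall i, Q i -> ideal_gen P (F i)) -> ideal_gen P (\sum_(i <- s | Q i) F i).
Proof. move=> H; apply: big_ind => //; [exact: ig0 | exact: igD]. Qed.

End Ideal.
Lemma ig_trans (R : comNzRingType) (P Q : R -> Prop) h f : (forall g, P g -> ideal_gen Q (g * h)) ->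
  ideal_gen P f -> ideal_gen Q (f * h).
Proof.
move=> H [k [a [g [Pg ->]]]]; rewrite big_distrl /=.
apply: ig_sum => l _; rewrite -mulrA; apply: igM; exact: H.
Qed.

From mathcomp Require Import ring.
From Stdlib Require Import FunctionalExtensionality.

Section Main.
Variables (K : fieldType) (n : nat) (E : rel 'I_n).
Hypotheses (Esym : symmetric E) (Eirr : irreflexive E).
Variables (i j : 'I_n).
Hypothesis Eij : E i j.

Definition delta (k : 'I_n) : nat -> nat := fun l => nat_of_bool (l == k).

Lemma x_mono k : x K k = mono K n (delta k).
Proof. by rewrite /x mvar_mono. Qed.

Definition Jgen (g : mpoly K n) : Prop :=
         (exists a b, E a b /\ g = x K a * x K b)
      \/ (exists p q, E i p /\ E j q /\ p != q /\ g = x K p * x K q)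
      \/ (exists t, E i t /\ E j t /\ g = x K t).

Lemma pp2 (C : {set 'I_n}) u v h : u \in C -> v \in C ->
  prime_pow K C 2 (h * (x K u * x K v)).
Proof.
move=> uC vC; apply: igG.
exists [tuple u; v]; split.
  by move=> k; rewrite !inE => /orP [/eqP-> | /eqP->].
by rewrite big_cons big_cons big_nil mulr1.
Qed.

Lemma easy_gen (C : {set 'I_n}) g : vertex_cover E C -> Jgen g ->
  prime_pow K C 2 (g * (x K i * x K j)).
Proof.
move=> vC [[a [b [eab ->]]] | [[p [q [eip [ejq [_ ->]]]]] | [t [eit [ejt ->]]]]].
- have hij := vC _ _ Eij; have hab := vC _ _ eab.
  case/orP: hij => hi; case/orP: hab => ha.
  + have -> : x K a * x K b * (x K i * x K j) = (x K b * x K j) * (x K a * x K i) by ring.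
    exact: pp2.
  + have -> : x K a * x K b * (x K i * x K j) = (x K a * x K j) * (x K b * x K i) by ring.
    exact: pp2.
  + have -> : x K a * x K b * (x K i * x K j) = (x K b * x K i) * (x K a * x K j) by ring.
    exact: pp2.
  + have -> : x K a * x K b * (x K i * x K j) = (x K a * x K i) * (x K b * x K j) by ring.
    exact: pp2.
- have hi := vC _ _ eip; have hj := vC _ _ ejq.
  case/orP: hi => hi; case/orP: hj => hj.
  + exact: pp2.
  + have -> : x K p * x K q * (x K i * x K j) = (x K p * x K j) * (x K i * x K q) by ring.
    exact: pp2.
  + have -> : x K p * x K q * (x K i * x K j) = (x K i * x K q) * (x K p * x K j) by ring.
    exact: pp2.
  + have -> : x K p * x K q * (x K i * x K j) = (x K i * x K j) * (x K p * x K q) by ring.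
    exact: pp2.
- have hij := vC _ _ Eij; have hi := vC _ _ eit; have hj := vC _ _ ejt.
  case: (boolP (t \in C)) => ht.
  + case/orP: hij => hij.
    * have -> : x K t * (x K i * x K j) = x K j * (x K t * x K i) by ring.
      exact: pp2.
    * have -> : x K t * (x K i * x K j) = x K i * (x K t * x K j) by ring.
      exact: pp2.
  + rewrite (negbTE ht) !orbF in hi hj.
    exact: pp2.
Qed.

Lemma easy f : ideal_gen Jgen f -> symb_pow K E 2 (f * (x K i * x K j)).
Proof.
move=> hf C [vC _]; apply: (ig_trans _ hf) => g Jg.
exact: easy_gen vC Jg.
Qed.


Lemma coef_pp (C : {set 'I_n}) g (e : nat -> nat) : prime_pow K C 2 g ->
  (forall u v, u \in C -> v \in C ->
     ~~ leexp n (fun l => (delta u l + delta v l)%N) e) -> coef e g = 0.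
Proof.
move=> [k [a [g0 [Pg ->]]]] H; rewrite coef_sum; apply: big1 => l _.
have [t [tC ->]] := Pg l.
have [u [v [uC vC ->]]] : exists u v, [/\ u \in C, v \in C &
    \prod_(k0 <- t) x K k0 = x K u * x K v].
  case: t tC => [[|u [|v [|]]] //] hs tC; exists u, v.
  by rewrite !tC ?inE ?eqxx ?orbT // big_cons big_cons big_nil mulr1.
by rewrite !x_mono -mono_add coef_mulmono (negbTE (H u v uC vC)).
Qed.

Definition goodv (g : 'I_n -> nat) : bool :=
     [exists a, exists b, E a b && (0 < g a)%N && (0 < g b)%N]
  || [exists p, exists q, [&& E i p, E j q, p != q, (0 < g p)%N & (0 < g q)%N]]
  || [exists t, [&& E i t, E j t & (0 < g t)%N]].

Definition goodb (e : nat -> nat) := goodv (fun k => e k).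

Lemma goodb_ext (e e' : nat -> nat) : eqexp n e e' -> goodb e = goodb e'.
Proof.
move/eqexpP => H; rewrite /goodb.
have -> : (fun k : 'I_n => e k) = (fun k : 'I_n => e' k).
  by apply: functional_extensionality => k; apply: H.
by [].
Qed.

Lemma monoDiv1 (e : nat -> nat) (a : 'I_n) : (0 < e a)%N ->
  mono K n e = mono K n (fun l => e l - delta a l)%N * x K a.
Proof.
move=> ha; rewrite x_mono -mono_add; apply: mono_ext => l _.
rewrite subnK // /delta; case: eqP => [->|_] //.
Qed.

Lemma monoDiv2 (e : nat -> nat) (a b : 'I_n) : a != b -> (0 < e a)%N -> (0 < e b)%N ->
  exists e2, mono K n e = mono K n e2 * (x K a * x K b).
Proof.
move=> nab ha hb.
rewrite (monoDiv1 ha) (@monoDiv1 _ b); last first.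
  rewrite /delta; case: eqP => [/val_inj hba|_]; last by rewrite subn0.
  by rewrite hba eqxx in nab.
by eexists; rewrite -mulrA [x K b * _]mulrC.
Qed.

Lemma good_in_J (e : nat -> nat) c : goodb e -> ideal_gen Jgen (@cst K n c * mono K n e).
Proof.
case/orP => [/orP [] | ].
- case/existsP => a /existsP [b /andP [/andP [eab ha] hb]].
  have nab : a != b by apply/eqP => hab; rewrite hab Eirr in eab.
  have [e2 ->] := monoDiv2 nab ha hb.
  rewrite mulrA; apply: igG; left; by exists a, b.
- case/existsP => p /existsP [q /and5P [eip ejq npq hp hq]].
  have [e2 ->] := monoDiv2 npq hp hq.
  rewrite mulrA; apply: igG; right; left; by exists p, q.
- case/existsP => t /and3P [eit ejt ht].
  rewrite (monoDiv1 ht) mulrA; apply: igG; right; right; by exists t.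
Qed.

Lemma bad_cover (e : nat -> nat) : ~~ goodb e -> exists C, [/\ minimal_vertex_cover E C,
  (forall k, k \in C -> e k = 0%N) &
  (i \in C /\ j \notin C) \/ (j \in C /\ i \notin C)].
Proof.
rewrite /goodb /goodv !negb_or => /andP [/andP [h1 h2] h3].
have Hind : forall p q : 'I_n, (0 < e p)%N -> (0 < e q)%N -> ~~ E p q.
  move=> p q hp hq; apply/negP => epq; move/negP: h1; apply.
  by apply/existsP; exists p; apply/existsP; exists q; rewrite epq hp hq.
case: (boolP [exists k : 'I_n, (0 < e k)%N && E i k]) => hi.
- case: (boolP [exists k : 'I_n, (0 < e k)%N && E j k]) => hj.
  + case/existsP: hi => p /andP [hp eip]; case/existsP: hj => q /andP [hq ejq].
    case: (eqVneq p q) => [epq | npq].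
    * move/negP: h3; case; apply/existsP; exists p.
      by rewrite eip hp -epq in ejq *; rewrite ejq.
    * move/negP: h2; case; apply/existsP; exists p; apply/existsP; exists q.
      by rewrite eip ejq npq hp hq.
  + have Ha : forall k : 'I_n, (0 < e k)%N -> ~~ E j k.
      move=> k hk; apply/negP => ejk; move/negP: hj; apply.
      by apply/existsP; exists k; rewrite hk ejk.
    have Eji : E j i by rewrite Esym.
    have [C [mC zC jC iC]] := cover_for Esym Eirr Eji Hind Ha.
    by exists C; split; [exact: mC | exact: zC | left; split].
- have Ha : forall k : 'I_n, (0 < e k)%N -> ~~ E i k.
    move=> k hk; apply/negP => eik; move/negP: hi; apply.
    by apply/existsP; exists k; rewrite hk eik.
  have [C [mC zC iC jC]] := cover_for Esym Eirr Eij Hind Ha.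
  by exists C; split; [exact: mC | exact: zC | right; split].
Qed.

Lemma cond (C : {set 'I_n}) (e : nat -> nat) (zC : forall k, k \in C -> e k = 0%N)
  (hC : (i \in C /\ j \notin C) \/ (j \in C /\ i \notin C)) u v :
  u \in C -> v \in C ->
  ~~ leexp n (fun l => (delta u l + delta v l)%N) (fun l => e l + (delta i l + delta j l))%N.
Proof.
move=> uC vC; apply/negP => /leexpP H.
have hu := H u (ltn_ord u); have hv := H v (ltn_ord v).
have eqv : forall a b : 'I_n, (nat_of_ord a == nat_of_ord b) = (a == b) by [].
rewrite /delta !eqv (zC u uC) in hu; rewrite /delta !eqv (zC v vC) in hv.
have nij : i != j by apply/eqP => h; have := Eij; rewrite h Eirr.
have key : forall w o : 'I_n, w != o -> o \notin C ->
   (nat_of_bool (u == u) + (u == v) <= 0 + ((u == w) + (u == o)))%N ->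
   (nat_of_bool (v == u) + (v == v) <= 0 + ((v == w) + (v == o)))%N -> False.
  move=> w o nwo oC.
  have uo : (u == o) = false by apply/eqP => h; rewrite -h uC in oC.
  have vo : (v == o) = false by apply/eqP => h; rewrite -h vC in oC.
  rewrite uo vo !eqxx => hu' hv'.
  case: (u =P w) hu' => [uw|uw] hu'; case: (v =P w) hv' => [vw|vw] hv' //.
  all: try by move: hu'; rewrite uw vw eqxx.
  all: try by move: hu'; rewrite add1n.
  all: try by move: hv'; rewrite addn1.
case: hC => [[iC jC] | [jC iC]].
- exact: (key i j nij jC hu hv).
- apply: (key j i _ iC).
  + by rewrite eq_sym.
  + by rewrite [((u == j) + _)%N]addnC.
  + by rewrite [((v == j) + _)%N]addnC.
Qed.

Lemma hard f : symb_pow K E 2 (f * (x K i * x K j)) -> ideal_gen Jgen f.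
Proof.
move=> H.
have [s fs] := islin_all f.
pose fg := \sum_(p <- s | goodb p.1) @cst K n p.2 * mono K n p.1.
pose fb := \sum_(p <- s | ~~ goodb p.1) @cst K n p.2 * mono K n p.1.
have efs : f = fg + fb by rewrite fs /fg /fb (bigID (fun p => goodb p.1)) /=.
have Jfg : ideal_gen Jgen fg by apply: ig_sum => p gp; exact: good_in_J.
suff fb0 : fb = 0 by rewrite efs fb0 addr0.
apply: coef_zero => e.
case: (boolP (goodb e)) => ge.
  rewrite /fb coef_sum; apply: big1 => p bp.
  rewrite coef_cstM coef_mono.
  case: ifP => eq; last by rewrite mulr0.
  by rewrite -(goodb_ext eq) ge in bp.
have [C [mC zC hC]] := bad_cover ge.
pose e' := (fun l => e l + (delta i l + delta j l))%N.
have -> : coef e fb = coef e' (fb * (x K i * x K j)).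
  rewrite !x_mono -mono_add coef_mulmono.
  have -> : leexp n (fun l => (delta i l + delta j l)%N) e'.
    by apply/leexpP => l _; rewrite /e' leq_addl.
  by apply: coef_ext => l _; rewrite /e' addnK.
have -> : fb * (x K i * x K j) = f * (x K i * x K j) - fg * (x K i * x K j).
  by rewrite efs; ring.
rewrite mcoefB (coef_pp (H C mC)); last by move=> u v; exact: cond.
rewrite (coef_pp (easy Jfg mC)); last by move=> u v; exact: cond.
by rewrite subr0.
Qed.

End Main.

Unset Implicit Arguments.

Theorem lemma3p2 (K : fieldType) (n : nat) (E : rel 'I_n)
  (Esym : symmetric E) (Eirr : irreflexive E) (i j : 'I_n) (Eij : E i j) :
  forall f : mpoly K n,
    colon (symb_pow K E 2) (x K i * x K j) f <->
    ideal_gen (fun g =>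
         (exists a b, E a b /\ g = x K a * x K b)
      \/ (exists p q, E i p /\ E j q /\ p != q /\ g = x K p * x K q)
      \/ (exists t, E i t /\ E j t /\ g = x K t)) f.
Proof.
move=> f; split.
- exact: (hard Esym Eirr Eij).
- exact: easy.
Qed.
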